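(* There is a universal constant $C$ such that the following holds. Let $u$ be a continuous function on $[0,1]\times[-1,1]^3$ which is $C^1$ in $t$ and $C^2$ in $x$ on $(0,1]\times(-1,1)^3$, and suppose that pointwise on $(0,1]\times(-1,1)^3$ $$(\partial_t-\Delta)u=-u^3+g(u,z),$$ where $g$ is a bounded function with $\|g\|:=\sup|g|$. Then for all $(t,x)\in(0,1]\times(-1,1)^3$, $x=(x_1,x_2,x_3)$, $$|u(t,x)|\le C\max\Big\{\frac{1}{\min\{\sqrt t,\,1-x_i,\,1+x_i,\ i=1,2,3\}},\ \|g\|^{1/3}\Big\}.$$ *)

(* Defs.v *)
From Stdlib Require Import Reals Lra.
Open Scope R_scope.

Definition F4 := R -> R -> R -> R -> R.

Definition in_closed (t x1 x2 x3 : R) : Prop :=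
  0 <= t <= 1 /\ -1 <= x1 <= 1 /\ -1 <= x2 <= 1 /\ -1 <= x3 <= 1.

Definition in_open (t x1 x2 x3 : R) : Prop :=
  0 < t <= 1 /\ -1 < x1 < 1 /\ -1 < x2 < 1 /\ -1 < x3 < 1.

Definition cont_on (S : R -> R -> R -> R -> Prop) (f : F4) : Prop :=
  forall t x1 x2 x3, S t x1 x2 x3 ->
  forall eps, 0 < eps -> exists delta, 0 < delta /\
    forall s y1 y2 y3, S s y1 y2 y3 ->
      Rabs (s - t) < delta -> Rabs (y1 - x1) < delta ->
      Rabs (y2 - x2) < delta -> Rabs (y3 - x3) < delta ->
      Rabs (f s y1 y2 y3 - f t x1 x2 x3) < eps.

Definition sect (f : F4) (i : nat) (t x1 x2 x3 : R) : R -> R :=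
  match i with
  | O => fun s => f t s x2 x3
  | S O => fun s => f t x1 s x3
  | _ => fun s => f t x1 x2 s
  end.

Definition coord (i : nat) (x1 x2 x3 : R) : R :=
  match i with
  | O => x1
  | S O => x2
  | _ => x3
  end.

(* ut is the t-derivative of u, D1 i the x_i-derivative, D2 i j the
   x_j-derivative of D1 i, on (0,1] x (-1,1)^3; all of them continuous there:
   i.e. u is C^1 in t and C^2 in x on (0,1] x (-1,1)^3. *)
Definition C1t_C2x (u ut : F4) (D1 : nat -> F4) (D2 : nat -> nat -> F4) : Prop :=
  (forall t x1 x2 x3, in_open t x1 x2 x3 ->
     derivable_pt_lim (fun s => u s x1 x2 x3) t (ut t x1 x2 x3)) /\
  (forall i t x1 x2 x3, (i < 3)%nat -> in_open t x1 x2 x3 ->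
     derivable_pt_lim (sect u i t x1 x2 x3) (coord i x1 x2 x3) (D1 i t x1 x2 x3)) /\
  (forall i j t x1 x2 x3, (i < 3)%nat -> (j < 3)%nat -> in_open t x1 x2 x3 ->
     derivable_pt_lim (sect (D1 i) j t x1 x2 x3) (coord j x1 x2 x3)
                      (D2 i j t x1 x2 x3)) /\
  cont_on in_open ut /\
  (forall i, (i < 3)%nat -> cont_on in_open (D1 i)) /\
  (forall i j, (i < 3)%nat -> (j < 3)%nat -> cont_on in_open (D2 i j)).

(* Real cube root of a nonnegative number (0 at 0). *)
Definition cbrt (y : R) : R :=
  match Rle_dec y 0 with
  | left _ => 0
  | right _ => Rpower y (/ 3)
  end.

(* Main.v *)
Require Import Defs.
From Stdlib Require Import Reals Lra Psatz Lia.
From Coquelicot Require Import Coquelicot.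
Open Scope R_scope.

Definition box (a0 b0 a1 b1 a2 b2 a3 b3 : R) (t x1 x2 x3 : R) : Prop :=
  a0 <= t <= b0 /\ a1 <= x1 <= b1 /\ a2 <= x2 <= b2 /\ a3 <= x3 <= b3.

Lemma L_left (f : R -> R) x l eta :
  derivable_pt_lim f x l -> 0 < eta ->
  (forall k, - eta < k < 0 -> f (x + k) <= f x) -> 0 <= l.
Proof.
  intros Hd He Hm.
  destruct (Rle_or_lt 0 l) as [Hl|Hl]; [exact Hl|].
  destruct (Hd (- l / 2)) as [d Hdd]; [lra|].
  set (k := - (Rmin d eta) / 2).
  assert (Hk1 : 0 < Rmin d eta) by (apply Rmin_pos; [apply cond_pos|lra]).
  assert (Hk2 : Rmin d eta <= d) by apply Rmin_l.
  assert (Hk3 : Rmin d eta <= eta) by apply Rmin_r.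
  assert (Hkn : k < 0) by (unfold k; lra).
  specialize (Hdd k ltac:(lra) ltac:(rewrite Rabs_left; unfold k; lra)).
  specialize (Hm k ltac:(unfold k; lra)).
  assert (Hq : 0 <= (f (x + k) - f x) / k).
  { unfold Rdiv. replace ((f (x + k) - f x) * / k) with ((f x - f (x + k)) * / (- k)) by (field; lra).
    apply Rmult_le_pos; [lra|]. apply Rlt_le, Rinv_0_lt_compat; lra. }
  apply Rabs_def2 in Hdd. lra.
Qed.

Lemma L_right (f : R -> R) x l eta :
  derivable_pt_lim f x l -> 0 < eta ->
  (forall k, 0 < k < eta -> f (x + k) <= f x) -> l <= 0.
Proof.
  intros Hd He Hm.
  destruct (Rle_or_lt l 0) as [Hl|Hl]; [exact Hl|].
  destruct (Hd (l / 2)) as [d Hdd]; [lra|].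
  set (k := (Rmin d eta) / 2).
  assert (Hk1 : 0 < Rmin d eta) by (apply Rmin_pos; [apply cond_pos|lra]).
  assert (Hk2 : Rmin d eta <= d) by apply Rmin_l.
  assert (Hk3 : Rmin d eta <= eta) by apply Rmin_r.
  assert (Hkn : 0 < k) by (unfold k; lra).
  specialize (Hdd k ltac:(lra) ltac:(rewrite Rabs_right; unfold k; lra)).
  specialize (Hm k ltac:(unfold k; lra)).
  assert (Hq : (f (x + k) - f x) / k <= 0).
  { unfold Rdiv. replace ((f (x + k) - f x) * / k) with (- ((f x - f (x + k)) * / k)) by (field; lra).
    apply Ropp_le_cancel. rewrite Ropp_involutive, Ropp_0.
    apply Rmult_le_pos; [lra|]. apply Rlt_le, Rinv_0_lt_compat; lra. }
  apply Rabs_def2 in Hdd. lra.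
Qed.

Lemma L_second (f f1 : R -> R) x l eta :
  0 < eta ->
  (forall y, x - eta < y < x + eta -> derivable_pt_lim f y (f1 y)) ->
  derivable_pt_lim f1 x l ->
  (forall y, x - eta < y < x + eta -> f y <= f x) -> l <= 0.
Proof.
  intros He Hd Hd1 Hm.
  assert (H0a : 0 <= f1 x).
  { apply (L_left f x (f1 x) eta); [apply Hd; lra|lra|].
    intros k Hk; apply Hm; lra. }
  assert (H0b : f1 x <= 0).
  { apply (L_right f x (f1 x) eta); [apply Hd; lra|lra|].
    intros k Hk; apply Hm; lra. }
  destruct (Rle_or_lt l 0) as [Hl|Hl]; [exact Hl|].
  destruct (Hd1 (l / 2)) as [d Hdd]; [lra|].
  set (k := (Rmin d eta) / 2).
  assert (Hk1 : 0 < Rmin d eta) by (apply Rmin_pos; [apply cond_pos|lra]).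
  assert (Hk2 : Rmin d eta <= d) by apply Rmin_l.
  assert (Hk3 : Rmin d eta <= eta) by apply Rmin_r.
  assert (Hkn : 0 < k) by (unfold k; lra).
  destruct (MVT_cor2 f f1 x (x + k)) as [c [Hc1 Hc2]]; [lra| |].
  { intros c Hc; apply Hd; unfold k in *; lra. }
  assert (Hpos : 0 < f1 c).
  { specialize (Hdd (c - x) ltac:(lra) ltac:(rewrite Rabs_right; unfold k in *; lra)).
    apply Rabs_def2 in Hdd.
    replace (x + (c - x)) with c in Hdd by ring.
    assert (f1 x = 0) by lra. rewrite H in Hdd.
    assert (Hq : 0 < (f1 c - 0) / (c - x)) by lra.
    unfold Rdiv in Hq. rewrite Rminus_0_r in Hq.
    destruct (Rle_or_lt (f1 c) 0) as [Hn|Hn]; [|exact Hn].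
    assert (f1 c * / (c - x) <= 0).
    { apply Ropp_le_cancel. rewrite Ropp_0. replace (- (f1 c * / (c - x))) with ((- f1 c) * / (c - x)) by ring.
      apply Rmult_le_pos; [lra|]. apply Rlt_le, Rinv_0_lt_compat; lra. }
    lra. }
  assert (f (x + k) <= f x) by (apply Hm; unfold k in *; lra).
  assert (0 < f1 c * (x + k - x)) by (apply Rmult_lt_0_compat; lra).
  lra.
Qed.

Definition phi (s : R) : R := / sqrt s.
Definition phi1 (s : R) : R := - / (2 * s * sqrt s).
Definition psi (r y : R) : R := 4 * r / (r * r - y * y).
Definition psi1 (r y : R) : R := 8 * r * y / ((r * r - y * y) * (r * r - y * y)).
Definition psi2 (r y : R) : R :=
  8 * r / ((r * r - y * y) * (r * r - y * y))
  + 32 * r * y * y / ((r * r - y * y) * (r * r - y * y) * (r * r - y * y)).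

Lemma phi_der s c : 0 < s -> derivable_pt_lim (fun t => phi (t + c)) (s - c) (phi1 s).
Proof.
  intros Hs. apply is_derive_Reals. unfold phi, phi1.
  assert (Hq : 0 < sqrt s) by (apply sqrt_lt_R0; lra).
  auto_derive; replace (s - c + c) with s by ring.
  - repeat split; lra.
  - rewrite sqrt_sqrt by lra. field. lra.
Qed.

Lemma psi_der r a z : 0 < r -> - r < z - a < r ->
  derivable_pt_lim (fun y => psi r (y - a)) z (psi1 r (z - a)).
Proof.
  intros Hr Hz. apply is_derive_Reals. unfold psi, psi1.
  assert (Hq : 0 < r * r - (z - a) * (z - a)) by nra.
  auto_derive.
  - lra.
  - field. lra.
Qed.

Lemma psi1_der r a z : 0 < r -> - r < z - a < r ->
  derivable_pt_lim (fun y => psi1 r (y - a)) z (psi2 r (z - a)).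
Proof.
  intros Hr Hz. apply is_derive_Reals. unfold psi1, psi2.
  assert (Hq : 0 < r * r - (z - a) * (z - a)) by nra.
  auto_derive.
  - nra.
  - field. lra.
Qed.

Lemma phi_pos s : 0 < s -> 0 < phi s.
Proof. intros; unfold phi; apply Rinv_0_lt_compat, sqrt_lt_R0; lra. Qed.

Lemma phi_ineq s : 0 < s -> 0 <= phi1 s + phi s ^ 3.
Proof.
  intros Hs. unfold phi, phi1.
  assert (Hq : 0 < sqrt s) by (apply sqrt_lt_R0; lra).
  assert (E : (/ sqrt s) ^ 3 = / (s * sqrt s)).
  { rewrite <- (sqrt_sqrt s) at 2 by lra. field. lra. }
  rewrite E.
  replace (- / (2 * s * sqrt s) + / (s * sqrt s)) with (/ (2 * s * sqrt s)) by (field; lra).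
  apply Rlt_le, Rinv_0_lt_compat. nra.
Qed.

Lemma phi_big s B : 0 < B -> 0 < s -> s <= / (B * B) -> B <= phi s.
Proof.
  intros HB Hs Hsb. unfold phi.
  assert (Hq : 0 < sqrt s) by (apply sqrt_lt_R0; lra).
  assert (sqrt s <= / B).
  { rewrite <- (sqrt_Rsqr (/ B)) by (apply Rlt_le, Rinv_0_lt_compat; lra).
    apply sqrt_le_1_alt. unfold Rsqr. rewrite <- Rinv_mult. exact Hsb. }
  replace B with (/ / B) by (field; lra).
  apply Rinv_le_contravar; lra.
Qed.

Lemma phi_rr r : 0 < r -> phi (r * r) = / r.
Proof. intros; unfold phi; rewrite sqrt_square; lra. Qed.

Lemma psi_pos r y : 0 < r -> - r < y < r -> 0 < psi r y.
Proof.
  intros Hr Hy. unfold psi. apply Rdiv_lt_0_compat; nra.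
Qed.

Lemma psi_ineq r y : 0 < r -> - r < y < r -> psi2 r y <= psi r y ^ 3.
Proof.
  intros Hr Hy. unfold psi, psi2.
  set (q := r * r - y * y).
  assert (Hq : 0 < q) by (unfold q; nra).
  replace ((4 * r / q) ^ 3) with (64 * r * r * r / (q * q * q)) by (field; lra).
  replace (8 * r / (q * q) + 32 * r * y * y / (q * q * q))
    with ((8 * r * q + 32 * r * y * y) / (q * q * q)) by (field; lra).
  unfold Rdiv. apply Rmult_le_compat_r.
  - apply Rlt_le, Rinv_0_lt_compat. repeat apply Rmult_lt_0_compat; lra.
  - unfold q. assert (0 <= r * (r*r - y*y)) by (apply Rmult_le_pos; nra). assert (0 <= r*r*r) by (repeat apply Rmult_le_pos; lra). nra.
Qed.

Lemma psi_big r y d : 0 < d <= r -> (r - d) * (r - d) <= y * y < r * r -> 2 / d <= psi r y.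
Proof.
  intros Hd Hy. unfold psi.
  assert (Hq : 0 < r * r - y * y) by nra.
  assert (Hq2 : r * r - y * y <= 2 * r * d) by nra.
  replace (2 / d) with (4 * r / (2 * r * d)) by (field; lra).
  unfold Rdiv. apply Rmult_le_compat_l; [lra|].
  apply Rinv_le_contravar; lra.
Qed.

Lemma psi_0 r : 0 < r -> psi r 0 = 4 / r.
Proof. intros; unfold psi; field; lra. Qed.

Lemma cube_sum a b : 0 <= a -> 0 <= b -> a ^ 3 + b ^ 3 <= (a + b) ^ 3.
Proof. intros; nra. Qed.

Module EVTm.
From mathcomp Require Import all_boot all_order all_algebra.
From mathcomp Require Import all_classical all_reals topology normedtype derive.
From mathcomp Require Import Rstruct Rstruct_topology.
Section EVT.
Import Order.TTheory GRing.Theory Num.Theory.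
Local Open Scope classical_set_scope.
Local Open Scope ring_scope.

Lemma itvE (a b x : R) : (x \in `[a, b]) <-> (Rle a x /\ Rle x b).
Proof.
rewrite in_itv /=; split.
  by move=> /andP[/RleP h1 /RleP h2].
by move=> [/RleP h1 /RleP h2]; rewrite h1 h2.
Qed.

Lemma ballR {x y d : R} : ball x d y -> Rlt (Rabs (y - x)) d.
Proof. rewrite /ball /= => /RltP. by rewrite -normrN opprB. Qed.

Lemma evt4 (a0 b0 a1 b1 a2 b2 a3 b3 : R) (f : F4) :
  Rle a0 b0 -> Rle a1 b1 -> Rle a2 b2 -> Rle a3 b3 ->
  cont_on (box a0 b0 a1 b1 a2 b2 a3 b3) f ->
  exists t x1 x2 x3, box a0 b0 a1 b1 a2 b2 a3 b3 t x1 x2 x3 /\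
    forall s y1 y2 y3, box a0 b0 a1 b1 a2 b2 a3 b3 s y1 y2 y3 ->
      Rle (f s y1 y2 y3) (f t x1 x2 x3).
Proof.
move=> h0 h1 h2 h3 cf.
pose A : set (R * R * R * R) := `[a0, b0]%classic `*` `[a1, b1]%classic `*` `[a2, b2]%classic `*` `[a3, b3]%classic.
pose F (p : R * R * R * R) := f p.1.1.1 p.1.1.2 p.1.2 p.2.
have AE : forall p, A p <-> box a0 b0 a1 b1 a2 b2 a3 b3 p.1.1.1 p.1.1.2 p.1.2 p.2.
  move=> [[[t x1] x2] x3]; rewrite /A /box /=.
  split.
    move=> [[[/itvE ? /itvE ?] /itvE ?] /itvE ?]; tauto.
  move=> [/itvE ? [/itvE ? [/itvE ? /itvE ?]]]; tauto.
have cA : compact A.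
  rewrite /A; apply: compact_setX; [apply: compact_setX; [apply: compact_setX|]|]; exact: segment_compact.
have nA : A !=set0.
  exists (a0, a1, a2, a3); apply/AE; rewrite /box /=; lra.
have cF : {within A, continuous F}.
  apply/subspace_continuousP => x Ax.
  apply/(@cvgrPdist_lt R R^o) => e e0.
  have /AE Bx := Ax.
  have e0' : Rlt 0 e by apply/RltP.
  have [d [d0 hd]] := cf _ _ _ _ Bx e e0'.
  rewrite /within; apply/nbhs_ballP; exists d; first by apply/RltP.
  move=> y [[[q0 q1] q2] q3] Ay.
  have /AE By := Ay.
  move: (hd _ _ _ _ By (ballR q0) (ballR q1) (ballR q2) (ballR q3)) => H.
  rewrite -normrN opprB; apply/RltP; exact: H.
have [c cA' hc] := compact_EVT_max nA cA cF.
have /set_mem /AE Bc := cA'.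
exists c.1.1.1, c.1.1.2, c.1.2, c.2; split => //.
move=> s y1 y2 y3 Bs.
have : A (s, y1, y2, y3) by apply/AE.
move=> /mem_set /hc /RleP; done.
Qed.
End EVT.
End EVTm.



Lemma cpt_eps g x eps : continuity_pt g x -> 0 < eps ->
  exists d, 0 < d /\ forall y, Rabs (y - x) < d -> Rabs (g y - g x) < eps.
Proof.
  intros H He. destruct (H eps He) as [d [Hd H']].
  exists d; split; [exact Hd|]. intros y Hy.
  destruct (Req_dec y x) as [->|Hn].
  - rewrite Rminus_diag, Rabs_R0; exact He.
  - apply H'. split; [unfold D_x, no_cond; split; [exact I|auto]|]. exact Hy.
Qed.

Lemma cont_minus S f g : cont_on S f -> cont_on S g ->
  cont_on S (fun t x1 x2 x3 => f t x1 x2 x3 - g t x1 x2 x3).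
Proof.
  intros Hf Hg t x1 x2 x3 HS eps He.
  destruct (Hf t x1 x2 x3 HS (eps/2) ltac:(lra)) as [d1 [Hd1 H1]].
  destruct (Hg t x1 x2 x3 HS (eps/2) ltac:(lra)) as [d2 [Hd2 H2]].
  exists (Rmin d1 d2); split; [apply Rmin_pos; lra|].
  intros s y1 y2 y3 HS' h0 h1 h2 h3.
  assert (A1 := Rmin_l d1 d2). assert (A2 := Rmin_r d1 d2).
  specialize (H1 s y1 y2 y3 HS' ltac:(lra) ltac:(lra) ltac:(lra) ltac:(lra)).
  specialize (H2 s y1 y2 y3 HS' ltac:(lra) ltac:(lra) ltac:(lra) ltac:(lra)).
  apply Rabs_def2 in H1. apply Rabs_def2 in H2. apply Rabs_def1; lra.
Qed.

Lemma cont_plus S f g : cont_on S f -> cont_on S g ->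
  cont_on S (fun t x1 x2 x3 => f t x1 x2 x3 + g t x1 x2 x3).
Proof.
  intros Hf Hg t x1 x2 x3 HS eps He.
  destruct (Hf t x1 x2 x3 HS (eps/2) ltac:(lra)) as [d1 [Hd1 H1]].
  destruct (Hg t x1 x2 x3 HS (eps/2) ltac:(lra)) as [d2 [Hd2 H2]].
  exists (Rmin d1 d2); split; [apply Rmin_pos; lra|].
  intros s y1 y2 y3 HS' h0 h1 h2 h3.
  assert (A1 := Rmin_l d1 d2). assert (A2 := Rmin_r d1 d2).
  specialize (H1 s y1 y2 y3 HS' ltac:(lra) ltac:(lra) ltac:(lra) ltac:(lra)).
  specialize (H2 s y1 y2 y3 HS' ltac:(lra) ltac:(lra) ltac:(lra) ltac:(lra)).
  apply Rabs_def2 in H1. apply Rabs_def2 in H2. apply Rabs_def1; lra.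
Qed.

Lemma cont_const S c : cont_on S (fun _ _ _ _ => c).
Proof.
  intros t x1 x2 x3 HS eps He. exists 1; split; [lra|].
  intros. rewrite Rminus_diag, Rabs_R0; exact He.
Qed.

Lemma cont_restr (S S' : R -> R -> R -> R -> Prop) f :
  (forall t x1 x2 x3, S' t x1 x2 x3 -> S t x1 x2 x3) -> cont_on S f -> cont_on S' f.
Proof.
  intros Hs Hf t x1 x2 x3 HS eps He.
  destruct (Hf t x1 x2 x3 (Hs _ _ _ _ HS) eps He) as [d [Hd H]].
  exists d; split; [exact Hd|]. intros; apply H; auto.
Qed.

Lemma cont_t S g : (forall t x1 x2 x3, S t x1 x2 x3 -> continuity_pt g t) ->
  cont_on S (fun t _ _ _ => g t).
Proof.
  intros Hg t x1 x2 x3 HS eps He.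
  destruct (cpt_eps g t eps (Hg _ _ _ _ HS) He) as [d [Hd H]].
  exists d; split; [exact Hd|]. intros; apply H; auto.
Qed.

Lemma cont_x1 S g : (forall t x1 x2 x3, S t x1 x2 x3 -> continuity_pt g x1) ->
  cont_on S (fun _ x1 _ _ => g x1).
Proof.
  intros Hg t x1 x2 x3 HS eps He.
  destruct (cpt_eps g x1 eps (Hg _ _ _ _ HS) He) as [d [Hd H]].
  exists d; split; [exact Hd|]. intros; apply H; auto.
Qed.

Lemma cont_x2 S g : (forall t x1 x2 x3, S t x1 x2 x3 -> continuity_pt g x2) ->
  cont_on S (fun _ _ x2 _ => g x2).
Proof.
  intros Hg t x1 x2 x3 HS eps He.
  destruct (cpt_eps g x2 eps (Hg _ _ _ _ HS) He) as [d [Hd H]].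
  exists d; split; [exact Hd|]. intros; apply H; auto.
Qed.

Lemma cont_x3 S g : (forall t x1 x2 x3, S t x1 x2 x3 -> continuity_pt g x3) ->
  cont_on S (fun _ _ _ x3 => g x3).
Proof.
  intros Hg t x1 x2 x3 HS eps He.
  destruct (cpt_eps g x3 eps (Hg _ _ _ _ HS) He) as [d [Hd H]].
  exists d; split; [exact Hd|]. intros; apply H; auto.
Qed.

Lemma dpl_cont f x l : derivable_pt_lim f x l -> continuity_pt f x.
Proof. intros H. apply derivable_continuous_pt. exists l. exact H. Qed.

Lemma dpl_plus_const f x l C : derivable_pt_lim f x l -> derivable_pt_lim (fun y => f y + C) x l.
Proof.
  intros H. replace l with (l + 0) by ring.
  apply (derivable_pt_lim_plus f (fun _ => C)); [exact H|apply derivable_pt_lim_const].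
Qed.

Lemma dpl_const_plus f x l C : derivable_pt_lim f x l -> derivable_pt_lim (fun y => C + f y) x l.
Proof.
  intros H. replace l with (0 + l) by ring.
  apply (derivable_pt_lim_plus (fun _ => C) f); [apply derivable_pt_lim_const|exact H].
Qed.

Lemma phi_der' c t : 0 < t + c -> derivable_pt_lim (fun s => phi (s + c)) t (phi1 (t + c)).
Proof.
  intros H. pose proof (phi_der (t + c) c H) as H'.
  replace (t + c - c) with t in H' by ring. exact H'.
Qed.

Lemma cube_lt a b : 0 <= a -> a < b -> a ^ 3 < b ^ 3.
Proof. intros. assert (H1: b^3 - a^3 = (b-a)*(b*b+a*b+a*a)) by ring. assert (0 < (b-a)*(b*b+a*b+a*a)) by (apply Rmult_lt_0_compat; nra). lra. Qed.

Lemma dpl_minus f g x a b : derivable_pt_lim f x a -> derivable_pt_lim g x b ->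
  derivable_pt_lim (fun y => f y - g y) x (a - b).
Proof. intros; apply (derivable_pt_lim_minus f g); auto. Qed.

Lemma edge r d y : 0 < d <= r / 2 -> -(r - d) <= y <= r - d ->
  (y <= -(r - d) \/ r - d <= y) -> 2 / d <= psi r y.
Proof. intros Hd Hy Hc. apply psi_big; [lra|]. destruct Hc; split; nra. Qed.

Definition wfun (t0 a1 a2 a3 r K : R) : F4 := fun t x1 x2 x3 =>
  phi (t + (r * r - t0)) + psi r (x1 - a1) + psi r (x2 - a2) + psi r (x3 - a3) + K.

Lemma core (u ut u1 u2 u3 u11 u22 u33 : F4) (M K t0 a1 a2 a3 r : R) :
  cont_on in_closed u ->
  (forall t x1 x2 x3, in_open t x1 x2 x3 ->
     derivable_pt_lim (fun s => u s x1 x2 x3) t (ut t x1 x2 x3)) ->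
  (forall t x1 x2 x3, in_open t x1 x2 x3 ->
     derivable_pt_lim (fun s => u t s x2 x3) x1 (u1 t x1 x2 x3)) ->
  (forall t x1 x2 x3, in_open t x1 x2 x3 ->
     derivable_pt_lim (fun s => u t x1 s x3) x2 (u2 t x1 x2 x3)) ->
  (forall t x1 x2 x3, in_open t x1 x2 x3 ->
     derivable_pt_lim (fun s => u t x1 x2 s) x3 (u3 t x1 x2 x3)) ->
  (forall t x1 x2 x3, in_open t x1 x2 x3 ->
     derivable_pt_lim (fun s => u1 t s x2 x3) x1 (u11 t x1 x2 x3)) ->
  (forall t x1 x2 x3, in_open t x1 x2 x3 ->
     derivable_pt_lim (fun s => u2 t x1 s x3) x2 (u22 t x1 x2 x3)) ->
  (forall t x1 x2 x3, in_open t x1 x2 x3 ->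
     derivable_pt_lim (fun s => u3 t x1 x2 s) x3 (u33 t x1 x2 x3)) ->
  (forall t x1 x2 x3, in_open t x1 x2 x3 ->
     ut t x1 x2 x3 - (u11 t x1 x2 x3 + u22 t x1 x2 x3 + u33 t x1 x2 x3)
     <= - (u t x1 x2 x3) ^ 3 + M) ->
  0 <= K -> M <= K ^ 3 ->
  0 < r -> r * r <= t0 -> t0 <= 1 ->
  -1 <= a1 - r -> a1 + r <= 1 ->
  -1 <= a2 - r -> a2 + r <= 1 ->
  -1 <= a3 - r -> a3 + r <= 1 ->
  u t0 a1 a2 a3 <= 13 / r + K.
Proof.
  intros Hc Ht H1 H2 H3 H11 H22 H33 Heq HK HKM Hr Ht0 Ht1 Ha1 Hb1 Ha2 Hb2 Ha3 Hb3.
  destruct (EVTm.evt4 0 1 (-1) 1 (-1) 1 (-1) 1 u ltac:(lra) ltac:(lra) ltac:(lra) ltac:(lra) Hc)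
    as [tb [xb1 [xb2 [xb3 [_ HB]]]]].
  set (B := u tb xb1 xb2 xb3) in HB.
  set (w := wfun t0 a1 a2 a3 r K).
  assert (Wc : w t0 a1 a2 a3 = 13 / r + K).
  { unfold w, wfun. replace (t0 + (r * r - t0)) with (r * r) by ring.
    rewrite phi_rr by lra. rewrite !Rminus_diag, psi_0 by lra. field. lra. }
  destruct (Rle_or_lt (u t0 a1 a2 a3) (13 / r + K)) as [Hok|Hbad]; [exact Hok|exfalso].
  set (B' := Rabs B + 1).
  assert (HB'0 : 0 < B') by (unfold B'; pose proof (Rabs_pos B); lra).
  assert (HBB' : B < B') by (unfold B'; pose proof (Rle_abs B); lra).
  set (sg := Rmin (r * r) (/ (B' * B'))).
  assert (Hsg0 : 0 < sg) by (unfold sg; apply Rmin_pos; [nra|apply Rinv_0_lt_compat; nra]).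
  assert (Hsg1 : sg <= r * r) by apply Rmin_l.
  assert (Hsg2 : sg <= / (B' * B')) by apply Rmin_r.
  set (dl := Rmin (r / 2) (2 / B')).
  assert (Hdl0 : 0 < dl) by (unfold dl; apply Rmin_pos; [lra|apply Rdiv_lt_0_compat; lra]).
  assert (Hdl1 : dl <= r / 2) by apply Rmin_l.
  assert (Hdl2 : dl <= 2 / B') by apply Rmin_r.
  assert (Hdl3 : B' <= 2 / dl).
  { apply (Rmult_le_reg_r dl); [lra|]. replace (2 / dl * dl) with 2 by (field; lra).
    apply (Rmult_le_compat_l B') in Hdl2; [|lra].
    replace (B' * (2 / B')) with 2 in Hdl2 by (field; lra). lra. }
  set (Bx := box (t0 - r * r + sg) t0 (a1 - r + dl) (a1 + r - dl)
                 (a2 - r + dl) (a2 + r - dl) (a3 - r + dl) (a3 + r - dl)).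
  assert (Bx_open : forall t x1 x2 x3, Bx t x1 x2 x3 -> in_open t x1 x2 x3).
  { unfold Bx, box, in_open; intros; lra. }
  assert (Bx_closed : forall t x1 x2 x3, Bx t x1 x2 x3 -> in_closed t x1 x2 x3).
  { unfold Bx, box, in_closed; intros; lra. }
  set (h := fun t x1 x2 x3 => u t x1 x2 x3 - w t x1 x2 x3).
  assert (Hch : cont_on Bx h).
  { unfold h. apply cont_minus; [exact (cont_restr _ _ _ Bx_closed Hc)|].
    unfold w, wfun.
    repeat apply cont_plus.
    - apply (cont_t Bx (fun t => phi (t + (r * r - t0)))). intros t x1 x2 x3 HS.
      unfold Bx, box in HS. apply (dpl_cont _ _ (phi1 (t + (r * r - t0)))).
      apply phi_der'. lra.
    - apply (cont_x1 Bx (fun x => psi r (x - a1))). intros t x1 x2 x3 HS.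
      unfold Bx, box in HS. apply (dpl_cont _ _ (psi1 r (x1 - a1))).
      apply psi_der; lra.
    - apply (cont_x2 Bx (fun x => psi r (x - a2))). intros t x1 x2 x3 HS.
      unfold Bx, box in HS. apply (dpl_cont _ _ (psi1 r (x2 - a2))).
      apply psi_der; lra.
    - apply (cont_x3 Bx (fun x => psi r (x - a3))). intros t x1 x2 x3 HS.
      unfold Bx, box in HS. apply (dpl_cont _ _ (psi1 r (x3 - a3))).
      apply psi_der; lra.
    - apply cont_const. }
  destruct (EVTm.evt4 (t0 - r * r + sg) t0 (a1 - r + dl) (a1 + r - dl) (a2 - r + dl) (a2 + r - dl) (a3 - r + dl) (a3 + r - dl) h ltac:(lra) ltac:(lra) ltac:(lra) ltac:(lra) Hch)
    as [tp [p1 [p2 [p3 [HBp Hmax]]]]].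
  assert (Hcen : Bx t0 a1 a2 a3) by (unfold Bx, box; lra).
  assert (Hhc : 0 < h t0 a1 a2 a3) by (unfold h; rewrite Wc; lra).
  assert (Hhp : 0 < h tp p1 p2 p3) by (pose proof (Hmax _ _ _ _ Hcen); lra).
  assert (Hop : in_open tp p1 p2 p3) by (apply Bx_open; exact HBp).
  assert (Hup : u tp p1 p2 p3 <= B) by (apply HB; apply Bx_closed; exact HBp).
  set (sp := tp + (r * r - t0)).
  set (y1 := p1 - a1). set (y2 := p2 - a2). set (y3 := p3 - a3).
  assert (Hwp : w tp p1 p2 p3 = phi sp + psi r y1 + psi r y2 + psi r y3 + K) by reflexivity.
  unfold Bx, box in HBp.
  assert (Hsp : sg <= sp) by (unfold sp; lra).
  assert (Hphi : 0 < phi sp) by (apply phi_pos; lra).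
  assert (Hps1 : 0 < psi r y1) by (apply psi_pos; unfold y1; lra).
  assert (Hps2 : 0 < psi r y2) by (apply psi_pos; unfold y2; lra).
  assert (Hps3 : 0 < psi r y3) by (apply psi_pos; unfold y3; lra).
  assert (Hhp' : w tp p1 p2 p3 < u tp p1 p2 p3) by (unfold h in Hhp; lra).
  assert (Htin : t0 - r * r + sg < tp).
  { destruct (Rle_or_lt tp (t0 - r * r + sg)) as [Hle|Hlt]; [exfalso|exact Hlt].
    assert (B' <= phi sp) by (apply phi_big; unfold sp in *; lra). lra. }
  assert (Hin1 : a1 - r + dl < p1 < a1 + r - dl).
  { destruct (Rlt_or_le (a1 - r + dl) p1); destruct (Rlt_or_le p1 (a1 + r - dl)); try lra;
      exfalso; assert (2 / dl <= psi r y1) by (apply edge; unfold y1; lra); lra. }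
  assert (Hin2 : a2 - r + dl < p2 < a2 + r - dl).
  { destruct (Rlt_or_le (a2 - r + dl) p2); destruct (Rlt_or_le p2 (a2 + r - dl)); try lra;
      exfalso; assert (2 / dl <= psi r y2) by (apply edge; unfold y2; lra); lra. }
  assert (Hin3 : a3 - r + dl < p3 < a3 + r - dl).
  { destruct (Rlt_or_le (a3 - r + dl) p3); destruct (Rlt_or_le p3 (a3 + r - dl)); try lra;
      exfalso; assert (2 / dl <= psi r y3) by (apply edge; unfold y3; lra); lra. }
  assert (Hdt : 0 <= ut tp p1 p2 p3 - phi1 sp).
  { apply (L_left (fun s => h s p1 p2 p3) tp _ (tp - (t0 - r * r + sg))).
    - unfold h. apply dpl_minus; [apply Ht; exact Hop|].
      unfold w, wfun. repeat apply dpl_plus_const. apply phi_der'. unfold sp in *; lra.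
    - lra.
    - intros k Hk. apply Hmax. unfold box; lra. }
  assert (Hd1 : u11 tp p1 p2 p3 - psi2 r y1 <= 0).
  { set (eta := Rmin (p1 - (a1 - r + dl)) ((a1 + r - dl) - p1)).
    assert (E0 : 0 < eta) by (apply Rmin_pos; lra).
    assert (E1 := Rmin_l (p1 - (a1 - r + dl)) ((a1 + r - dl) - p1)).
    assert (E2 := Rmin_r (p1 - (a1 - r + dl)) ((a1 + r - dl) - p1)).
    fold eta in E1, E2.
    apply (L_second (fun y => h tp y p2 p3) (fun y => u1 tp y p2 p3 - psi1 r (y - a1)) p1 _ eta E0).
    - intros y Hy. unfold h. apply dpl_minus.
      + apply H1; apply Bx_open; unfold Bx, box; lra.
      + unfold w, wfun. repeat apply dpl_plus_const. apply dpl_const_plus. apply psi_der; lra.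
    - apply dpl_minus; [apply H11; exact Hop|]. apply psi1_der; lra.
    - intros y Hy. apply Hmax. unfold box; lra. }
  assert (Hd2 : u22 tp p1 p2 p3 - psi2 r y2 <= 0).
  { set (eta := Rmin (p2 - (a2 - r + dl)) ((a2 + r - dl) - p2)).
    assert (E0 : 0 < eta) by (apply Rmin_pos; lra).
    assert (E1 := Rmin_l (p2 - (a2 - r + dl)) ((a2 + r - dl) - p2)).
    assert (E2 := Rmin_r (p2 - (a2 - r + dl)) ((a2 + r - dl) - p2)).
    fold eta in E1, E2.
    apply (L_second (fun y => h tp p1 y p3) (fun y => u2 tp p1 y p3 - psi1 r (y - a2)) p2 _ eta E0).
    - intros y Hy. unfold h. apply dpl_minus.
      + apply H2; apply Bx_open; unfold Bx, box; lra.
      + unfold w, wfun. repeat apply dpl_plus_const. apply dpl_const_plus. apply psi_der; lra.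
    - apply dpl_minus; [apply H22; exact Hop|]. apply psi1_der; lra.
    - intros y Hy. apply Hmax. unfold box; lra. }
  assert (Hd3 : u33 tp p1 p2 p3 - psi2 r y3 <= 0).
  { set (eta := Rmin (p3 - (a3 - r + dl)) ((a3 + r - dl) - p3)).
    assert (E0 : 0 < eta) by (apply Rmin_pos; lra).
    assert (E1 := Rmin_l (p3 - (a3 - r + dl)) ((a3 + r - dl) - p3)).
    assert (E2 := Rmin_r (p3 - (a3 - r + dl)) ((a3 + r - dl) - p3)).
    fold eta in E1, E2.
    apply (L_second (fun y => h tp p1 p2 y) (fun y => u3 tp p1 p2 y - psi1 r (y - a3)) p3 _ eta E0).
    - intros y Hy. unfold h. apply dpl_minus.
      + apply H3; apply Bx_open; unfold Bx, box; lra.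
      + unfold w, wfun. repeat apply dpl_plus_const. apply dpl_const_plus. apply psi_der; lra.
    - apply dpl_minus; [apply H33; exact Hop|]. apply psi1_der; lra.
    - intros y Hy. apply Hmax. unfold box; lra. }
  pose proof (Heq _ _ _ _ Hop) as He.
  pose proof (phi_ineq sp ltac:(lra)) as Ip.
  pose proof (psi_ineq r y1 Hr ltac:(unfold y1; lra)) as I1.
  pose proof (psi_ineq r y2 Hr ltac:(unfold y2; lra)) as I2.
  pose proof (psi_ineq r y3 Hr ltac:(unfold y3; lra)) as I3.
  pose proof (cube_lt (w tp p1 p2 p3) (u tp p1 p2 p3) ltac:(lra) Hhp') as Ic.
  rewrite Hwp in Ic.
  pose proof (cube_sum (phi sp) (psi r y1) ltac:(lra) ltac:(lra)).
  pose proof (cube_sum (phi sp + psi r y1) (psi r y2) ltac:(lra) ltac:(lra)).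
  pose proof (cube_sum (phi sp + psi r y1 + psi r y2) (psi r y3) ltac:(lra) ltac:(lra)).
  pose proof (cube_sum (phi sp + psi r y1 + psi r y2 + psi r y3) K ltac:(lra) ltac:(lra)).
  lra.
Qed.


Lemma cont_opp S f : cont_on S f -> cont_on S (fun t x1 x2 x3 => - f t x1 x2 x3).
Proof.
  intros Hf t x1 x2 x3 HS eps He.
  destruct (Hf t x1 x2 x3 HS eps He) as [d [Hd H]].
  exists d; split; [exact Hd|]. intros s y1 y2 y3 HS' h0 h1 h2 h3.
  specialize (H s y1 y2 y3 HS' h0 h1 h2 h3).
  replace (- f s y1 y2 y3 - - f t x1 x2 x3) with (- (f s y1 y2 y3 - f t x1 x2 x3)) by ring.
  rewrite Rabs_Ropp; exact H.
Qed.

Lemma dpl_opp f x l : derivable_pt_lim f x l -> derivable_pt_lim (fun y => - f y) x (- l).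
Proof. intros H; apply (derivable_pt_lim_opp f); exact H. Qed.

Lemma cbrt_prop M : 0 <= M -> 0 <= cbrt M /\ M <= cbrt M ^ 3.
Proof.
  intros HM. unfold cbrt. destruct (Rle_dec M 0) as [H|H].
  - simpl; lra.
  - split.
    + unfold Rpower. apply Rlt_le, exp_pos.
    + assert (HM' : 0 < M) by lra.
      rewrite <- Rpower_pow by (unfold Rpower; apply exp_pos).
      rewrite Rpower_mult. replace (/ 3 * INR 3) with 1 by (simpl; field).
      rewrite Rpower_1 by exact HM'. lra.
Qed.

Theorem lemma2p7 :
  exists C : R,
  forall (u g ut : F4) (D1 : nat -> F4) (D2 : nat -> nat -> F4) (M : R),
    cont_on in_closed u ->
    C1t_C2x u ut D1 D2 ->
    0 <= M ->
    (forall t x1 x2 x3, in_open t x1 x2 x3 -> Rabs (g t x1 x2 x3) <= M) ->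
    (forall t x1 x2 x3, in_open t x1 x2 x3 ->
       ut t x1 x2 x3
       - (D2 0%nat 0%nat t x1 x2 x3 + D2 1%nat 1%nat t x1 x2 x3
          + D2 2%nat 2%nat t x1 x2 x3)
       = - (u t x1 x2 x3) ^ 3 + g t x1 x2 x3) ->
    forall t x1 x2 x3, in_open t x1 x2 x3 ->
      Rabs (u t x1 x2 x3) <=
      C * Rmax
            (/ Rmin (sqrt t)
                 (Rmin (Rmin (1 - x1) (1 + x1))
                   (Rmin (Rmin (1 - x2) (1 + x2)) (Rmin (1 - x3) (1 + x3)))))
            (cbrt M).
Proof.
  exists 14.
  intros u g ut D1 D2 M Hc HC HM Hg Heq t x1 x2 x3 Hop.
  destruct HC as [Ht [Hd1 [Hd2 _]]].
  destruct (cbrt_prop M HM) as [HK0 HK3].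
  set (K := cbrt M) in *.
  set (m1 := Rmin (1 - x1) (1 + x1)).
  set (m2 := Rmin (1 - x2) (1 + x2)).
  set (m3 := Rmin (1 - x3) (1 + x3)).
  set (m23 := Rmin m2 m3).
  set (mx := Rmin m1 m23).
  set (r := Rmin (sqrt t) mx).
  pose proof (Rmin_l (1 - x1) (1 + x1)). pose proof (Rmin_r (1 - x1) (1 + x1)).
  pose proof (Rmin_l (1 - x2) (1 + x2)). pose proof (Rmin_r (1 - x2) (1 + x2)).
  pose proof (Rmin_l (1 - x3) (1 + x3)). pose proof (Rmin_r (1 - x3) (1 + x3)).
  pose proof (Rmin_l m2 m3). pose proof (Rmin_r m2 m3).
  pose proof (Rmin_l m1 m23). pose proof (Rmin_r m1 m23).
  pose proof (Rmin_l (sqrt t) mx). pose proof (Rmin_r (sqrt t) mx).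
  assert (F1 : r <= mx) by exact H10. assert (F2 : mx <= m1) by exact H7.
  assert (F3 : mx <= m23) by exact H8. assert (F4 : m23 <= m2) by exact H5.
  assert (F5 : m23 <= m3) by exact H6.
  assert (G1 : m1 <= 1 - x1) by exact H. assert (G2 : m1 <= 1 + x1) by exact H0.
  assert (G3 : m2 <= 1 - x2) by exact H1. assert (G4 : m2 <= 1 + x2) by exact H2.
  assert (G5 : m3 <= 1 - x3) by exact H3. assert (G6 : m3 <= 1 + x3) by exact H4.
  clear H H0 H1 H2 H3 H4 H5 H6 H7 H8 H10.
  unfold in_open in Hop.
  assert (Hst : 0 < sqrt t) by (apply sqrt_lt_R0; lra).
  assert (Hr : 0 < r).
  { unfold r, mx, m23, m1, m2, m3. repeat apply Rmin_glb_lt; lra. }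
  assert (Hrt : r * r <= t).
  { assert (Hrs : r <= sqrt t) by exact H9. rewrite <- (sqrt_sqrt t) by lra. apply Rmult_le_compat; lra. }
  assert (Hup : u t x1 x2 x3 <= 13 / r + K).
  { apply (core u ut (D1 0%nat) (D1 1%nat) (D1 2%nat) (D2 0%nat 0%nat) (D2 1%nat 1%nat) (D2 2%nat 2%nat) M K);
      try lra.
    - exact Hc.
    - exact Ht.
    - intros ? ? ? ? Ho; exact (Hd1 0%nat _ _ _ _ ltac:(lia) Ho).
    - intros ? ? ? ? Ho; exact (Hd1 1%nat _ _ _ _ ltac:(lia) Ho).
    - intros ? ? ? ? Ho; exact (Hd1 2%nat _ _ _ _ ltac:(lia) Ho).
    - intros ? ? ? ? Ho; exact (Hd2 0%nat 0%nat _ _ _ _ ltac:(lia) ltac:(lia) Ho).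
    - intros ? ? ? ? Ho; exact (Hd2 1%nat 1%nat _ _ _ _ ltac:(lia) ltac:(lia) Ho).
    - intros ? ? ? ? Ho; exact (Hd2 2%nat 2%nat _ _ _ _ ltac:(lia) ltac:(lia) Ho).
    - intros t' y1 y2 y3 Ho. rewrite Heq by exact Ho.
      pose proof (Hg _ _ _ _ Ho). pose proof (Rle_abs (g t' y1 y2 y3)). lra. }
  assert (Hlo : - u t x1 x2 x3 <= 13 / r + K).
  { apply (core (fun a b c d => - u a b c d) (fun a b c d => - ut a b c d)
             (fun a b c d => - D1 0%nat a b c d) (fun a b c d => - D1 1%nat a b c d)
             (fun a b c d => - D1 2%nat a b c d)
             (fun a b c d => - D2 0%nat 0%nat a b c d) (fun a b c d => - D2 1%nat 1%nat a b c d)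
             (fun a b c d => - D2 2%nat 2%nat a b c d) M K);
      try lra.
    - apply cont_opp; exact Hc.
    - intros ? ? ? ? Ho; apply dpl_opp; exact (Ht _ _ _ _ Ho).
    - intros ? ? ? ? Ho; apply dpl_opp; exact (Hd1 0%nat _ _ _ _ ltac:(lia) Ho).
    - intros ? ? ? ? Ho; apply dpl_opp; exact (Hd1 1%nat _ _ _ _ ltac:(lia) Ho).
    - intros ? ? ? ? Ho; apply dpl_opp; exact (Hd1 2%nat _ _ _ _ ltac:(lia) Ho).
    - intros ? ? ? ? Ho; apply dpl_opp; exact (Hd2 0%nat 0%nat _ _ _ _ ltac:(lia) ltac:(lia) Ho).
    - intros ? ? ? ? Ho; apply dpl_opp; exact (Hd2 1%nat 1%nat _ _ _ _ ltac:(lia) ltac:(lia) Ho).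
    - intros ? ? ? ? Ho; apply dpl_opp; exact (Hd2 2%nat 2%nat _ _ _ _ ltac:(lia) ltac:(lia) Ho).
    - intros t' y1 y2 y3 Ho. pose proof (Heq _ _ _ _ Ho) as E.
      pose proof (Hg _ _ _ _ Ho). pose proof (Rle_abs (- g t' y1 y2 y3)) as Hab.
      rewrite Rabs_Ropp in Hab.
      replace ((- u t' y1 y2 y3) ^ 3) with (- (u t' y1 y2 y3 ^ 3)) by ring.
      lra. }
  pose proof (Rmax_l (/ r) K). pose proof (Rmax_r (/ r) K).
  apply Rabs_le. unfold Rdiv in Hup, Hlo. lra.
Qed.
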